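(* Let $\mathcal{H}$ be a finite-dimensional complex Hilbert space and $n\ge 0$. Let $\mathcal{K}_{n+1}$ be a map of $n+1$ operator arguments on $\mathcal H$ which (a) admits a decomposition $\mathcal{K}_{n+1}=\sum_{(m_0,\ldots,m_n)}\mathcal{K}_{m_0,\ldots,m_n}$ into finitely many completely positive multi-variable maps, where each $\mathcal{K}_{m_0,\ldots,m_n}$ is homogeneous of degree $m_i\in\mathbb{Z}_{\ge0}$ in its $i$-th argument (i.e. $\mathcal K_{m_0,\ldots,m_n}[\ldots,z\hat\rho_i,\ldots]=z^{m_i}\mathcal K_{m_0,\ldots,m_n}[\ldots,\hat\rho_i,\ldots]$ for all $z\in\mathbb C$), each $\mathcal K_{m_0,\ldots,m_n}$ with exactly one $m_i=1$ and all others zero being linear in that argument; (b) satisfies $\mathcal{K}_{n+1}[p\hat\rho_n,\ldots,p\hat\rho_0]=p\,\mathcal{K}_{n+1}[\hat\rho_n,\ldots,\hat\rho_0]$ for all $p\in[0,1]$ and all density matrices $\hat\rho_i$; and (c) is trace preserving on density matrices, i.e. $\mathrm{Tr}\,\mathcal{K}_{n+1}[\hat\rho_n,\ldots,\hat\rho_0]=1$ whenever all $\hat\rho_i$ are density matrices. Then there exist operators $V_{\alpha n m}$ on $\mathcal H$ ($0\le m\le n$, $\alpha$ in a finite index set) and numbers $p_{nm}\ge 0$ with $\sum_{m=0}^n p_{nm}=1$ and $\sum_\alpha V_{\alpha nm}V_{\alpha nm}^\dagger=p_{nm}\hat I$ for each $m$, such that for all density matrices $\hat\rho_0,\ldots,\hat\rho_n$,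 $$\mathcal{K}_{n+1}[\hat\rho_n,\ldots,\hat\rho_0]=\sum_{m=0}^n\sum_\alpha V_{\alpha nm}^\dagger\,\hat\rho_m\,V_{\alpha nm}.$$
   Context: A map $\mathcal K$ of $n+1$ operator arguments is completely positive (in the multi-variable sense of Ando–Choi) if for every $k$ and every $(n+1)$-tuple of positive $k\times k$ block operator matrices $\hat\rho_m=(\hat\rho_{m,ij})_{i,j}$ ($0\le m\le n$), the block matrix with $(i,j)$ block $\mathcal{K}[\hat\rho_{n,ij},\ldots,\hat\rho_{0,ij}]$ is positive. Hypothesis (a) is the Ando–Choi decomposition of multi-variable CP maps (anti-homogeneous parts are excluded), and (b) is the non-signalling condition expressed on sub-normalized states. *)

(* Defs.v *)
From HB Require Import structures.
From mathcomp Require Import all_boot all_order all_algebra.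
From mathcomp Require Import complex.
From mathcomp Require Import reals.
Set Implicit Arguments. Unset Strict Implicit. Unset Printing Implicit Defensive.
Import Order.TTheory GRing.Theory Num.Theory.
Local Open Scope ring_scope.

(* Conventions: the Hilbert space is C^d, with C = R[i] the complex numbers
   built over a real field R : realType (a model of the real numbers).  The order on R[i] is the
   usual partial order of a numClosedField: 0 <= z iff z is real and >= 0. *)

Definition adj (R : realType) (m n : nat) (A : 'M[R[i]]_(m, n)) : 'M[R[i]]_(n, m) :=
  (map_mx (fun z : R[i] => z^*) A)^T.

Definition psd (R : realType) (d : nat) (A : 'M[R[i]]_d) : Prop :=
  forall v : 'cV[R[i]]_d, 0 <= (adj v *m A *m v) 0 0.

(* positivity of a k x k block operator matrix with blocks B i j : 'M_d,
   i.e. of the operator on C^k (x) C^d with these blocks *)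
Definition psd_block (R : realType) (d k : nat) (B : 'I_k -> 'I_k -> 'M[R[i]]_d) : Prop :=
  forall v : 'I_k -> 'cV[R[i]]_d,
    0 <= (\sum_(i < k) \sum_(j < k) (adj (v i) *m B i j *m v j)) 0 0.

Definition density (R : realType) (d : nat) (A : 'M[R[i]]_d) : Prop :=
  psd A /\ \tr A = 1.

(* a map of n+1 operator arguments; rho m is the m-th argument hat rho_m,
   so K rho stands for K[rho_n, ..., rho_0] *)
Definition multimap (R : realType) (d n : nat) :=
  ('I_n.+1 -> 'M[R[i]]_d) -> 'M[R[i]]_d.

Definition mCP (R : realType) (d n : nat) (K : multimap R d n) : Prop :=
  forall (k : nat) (rh : 'I_n.+1 -> 'I_k -> 'I_k -> 'M[R[i]]_d),
    (forall m, psd_block (rh m)) ->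
    psd_block (fun i j => K (fun m => rh m i j)).

Definition upd (R : realType) (d n : nat) (rho : 'I_n.+1 -> 'M[R[i]]_d)
  (m : 'I_n.+1) (X : 'M[R[i]]_d) : 'I_n.+1 -> 'M[R[i]]_d :=
  fun l => if l == m then X else rho l.

Definition homogeneous (R : realType) (d n : nat) (K : multimap R d n)
  (deg : 'I_n.+1 -> nat) : Prop :=
  forall (rho : 'I_n.+1 -> 'M[R[i]]_d) (m : 'I_n.+1) (z : R[i]),
    K (upd rho m (z *: rho m)) = z ^+ deg m *: K rho.

Definition linear_in (R : realType) (d n : nat) (K : multimap R d n)
  (m : 'I_n.+1) : Prop :=
  forall (rho : 'I_n.+1 -> 'M[R[i]]_d) (a : R[i]) (X Y : 'M[R[i]]_d),
    K (upd rho m (a *: X + Y)) = a *: K (upd rho m X) + K (upd rho m Y).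

(* Main.v *)
Require Import Defs.
From HB Require Import structures.
From mathcomp Require Import all_boot all_order all_algebra.
From mathcomp Require Import complex.
From mathcomp Require Import reals.
From mathcomp Require Import ring zify.
From Stdlib Require Import FunctionalExtensionality.
Set Implicit Arguments. Unset Strict Implicit. Unset Printing Implicit Defensive.
Import Order.TTheory GRing.Theory Num.Theory.
Local Open Scope ring_scope.


Section Form.
Variable C : numClosedFieldType.
Variable T : finType.
Implicit Types (G : T -> T -> C) (u w : T -> C).

Definition Bf G u w := \sum_x \sum_y (u x)^* * G x y * w y.
Definition psdf G := forall v, 0 <= Bf G v v.
Definition dl (x : T) : T -> C := fun z => (z == x)%:R.

Lemma sum_dl (x : T) (F : T -> C) : \sum_z (z == x)%:R * F z = F x.
Proof.
rewrite (bigD1 x) //= eqxx mul1r big1 ?addr0 // => z /negbTE ->; by rewrite mul0r.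
Qed.

Lemma sum_dr (x : T) (F : T -> C) : \sum_z F z * (z == x)%:R = F x.
Proof.
rewrite (bigD1 x) //= eqxx mulr1 big1 ?addr0 // => z /negbTE ->; by rewrite mulr0.
Qed.

Lemma Bf_Dl G u1 u2 w : Bf G (fun x => u1 x + u2 x) w = Bf G u1 w + Bf G u2 w.
Proof.
rewrite /Bf -big_split /=; apply: eq_bigr => x _.
rewrite -big_split /=; apply: eq_bigr => y _.
by rewrite rmorphD /= !mulrDl.
Qed.

Lemma Bf_Zl G a u w : Bf G (fun x => a * u x) w = a^* * Bf G u w.
Proof.
rewrite /Bf mulr_sumr; apply: eq_bigr => x _.
rewrite mulr_sumr; apply: eq_bigr => y _.
by rewrite rmorphM /= !mulrA.
Qed.

Lemma Bf_Dr G u w1 w2 : Bf G u (fun x => w1 x + w2 x) = Bf G u w1 + Bf G u w2.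
Proof.
rewrite /Bf -big_split /=; apply: eq_bigr => x _.
rewrite -big_split /=; apply: eq_bigr => y _.
by rewrite !mulrDr.
Qed.

Lemma Bf_Zr G a u w : Bf G u (fun x => a * w x) = a * Bf G u w.
Proof.
rewrite /Bf mulr_sumr; apply: eq_bigr => x _.
rewrite mulr_sumr; apply: eq_bigr => y _.
by rewrite mulrCA.
Qed.

Lemma Bf_dd G x y : Bf G (dl x) (dl y) = G x y.
Proof.
rewrite /Bf /dl.
under eq_bigr do under eq_bigr do rewrite rmorph_nat -mulrA.
under eq_bigr do rewrite -mulr_sumr.
rewrite sum_dl; exact: sum_dr.
Qed.

Lemma Bf_ex G x y a :
  Bf G (fun z => dl x z + a * dl y z) (fun z => dl x z + a * dl y z) =
  G x x + a * G x y + a^* * G y x + a^* * a * G y y.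
Proof.
rewrite Bf_Dl Bf_Zl !Bf_Dr !Bf_Zr !Bf_dd.
by rewrite mulrDr !addrA mulrA.
Qed.

Lemma real_ge0 (z : C) : 0 <= z -> z^* = z.
Proof. by move=> h; apply: conj_Creal; apply: ger0_real. Qed.

Lemma eq_by (L R X Y : C) : L = R -> X - Y = L - R -> X = Y.
Proof. by move=> -> h; apply/eqP; rewrite -subr_eq0 h subrr. Qed.

Lemma psdf_diag G x : psdf G -> 0 <= G x x.
Proof. by move=> h; rewrite -Bf_dd; apply: h. Qed.

Lemma iNi : - 'i * 'i = 1 :> C.
Proof. by rewrite mulNr -expr2 sqrCi opprK. Qed.

Lemma psdf_herm G x y : psdf G -> G y x = (G x y)^*.
Proof.
move=> h.
have rx := real_ge0 (psdf_diag x h).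
have ry := real_ge0 (psdf_diag y h).
have e1 := real_ge0 (h (fun z => dl x z + 1 * dl y z)).
have e2 := real_ge0 (h (fun z => dl x z + 'i * dl y z)).
rewrite Bf_ex in e1; rewrite Bf_ex in e2.
rewrite rmorph1 !mul1r in e1.
rewrite conjCi iNi mul1r in e2.
rewrite !rmorphD /= rx ry in e1.
rewrite !rmorphD !rmorphM /= rx ry !rmorphN /= conjCi opprK in e2.
set s := G x y in e1 e2 *; set t := G y x in e1 e2 *.
have f1 : s^* + t^* = s + t by apply: (eq_by e1); ring.
have f2 : 'i * (t^* - s^*) = 'i * (s - t) by apply: (eq_by e2); ring.
move/mulfI: f2 => /(_ (neq0Ci C)) f2.
have f3 : t^* *+ 2 = s *+ 2.
  by apply: (eq_by (f_equal2 +%R f1 f2)); ring.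
have : t^* = s by move/eqP: f3; rewrite eqrMn2r /= => /eqP.
by move=> <-; rewrite conjCK.
Qed.

Lemma Bf_dl_l G x w : Bf G (dl x) w = \sum_y G x y * w y.
Proof.
rewrite /Bf /dl.
under eq_bigr do under eq_bigr do rewrite rmorph_nat -!mulrA.
under eq_bigr do rewrite -mulr_sumr.
by rewrite sum_dl.
Qed.

Lemma Bf_dl_r G u y : Bf G u (dl y) = \sum_x (u x)^* * G x y.
Proof.
rewrite /Bf /dl.
apply: eq_bigr => x _; by rewrite sum_dr.
Qed.

Lemma zero_pivot G p y : psdf G -> G p p = 0 -> G p y = 0.
Proof.
move=> h g0.
set s := G p y; set g := G y y.
have rg := real_ge0 (psdf_diag y h).
have hyp := psdf_herm p y h.
set n := s * s^*.
have n0 : 0 <= n by apply: mul_conjC_ge0.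
have rn : n^* = n by apply: real_ge0.
case: (eqVneq s 0) => // sn0.
have npos : 0 < n by rewrite lt_def n0 andbT mulf_neq0 // conjC_eq0.
set k := (g + 1) / (n *+ 2).
have k0 : 0 <= k.
  apply: divr_ge0; last by rewrite mulrn_wge0.
  by rewrite addr_ge0 // psdf_diag.
have rk := real_ge0 k0.
have := h (fun z => dl y z + (- k * s) * dl p z).
rewrite Bf_ex -/g -/s hyp g0 mulr0 addr0.
rewrite rmorphM rmorphN /= rk.
have -> : g + - k * s * s^* + - k * s^* * s = g - k * (n *+ 2).
  rewrite /n mulr2n; ring.
rewrite /k mulfVK; last by rewrite mulrn_eq0 /= gt_eqF.
by rewrite opprD addrA subrr add0r oppr_ge0 ler10.
Qed.

Lemma zero_pivot' G p y : psdf G -> G p p = 0 -> G y p = 0.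
Proof. by move=> h g0; rewrite (psdf_herm p y h) zero_pivot // rmorph0. Qed.

Definition suppf G (S : {set T}) := forall x y, (x \notin S) || (y \notin S) -> G x y = 0.

Lemma chol_aux k : forall (S : {set T}), #|S| = k -> forall G, suppf G S -> psdf G ->
  exists L : T -> T -> C, forall x y, G x y = \sum_(a in S) (L a x)^* * L a y.
Proof.
elim: k => [|k IH] S cS G sG pG.
  move/eqP: cS; rewrite cards_eq0 => /eqP S0.
  exists (fun _ _ => 0) => x y; rewrite S0 big_set0; apply: sG.
  by rewrite S0 in_set0.
have : (0 < #|S|)%N by rewrite cS.
case/card_gt0P => p pS.
have cS' : #|S :\ p| = k.
  by move: cS; rewrite (cardsD1 p S) pS add1n => -[].
have inS' z : (z \in S :\ p) = (z != p) && (z \in S) by rewrite !inE.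
case: (eqVneq (G p p) 0) => g0.
  have sG' : suppf G (S :\ p).
    move=> x y; rewrite !inS' !negb_and !negbK.
    case: (eqVneq x p) => [->|_]; first by rewrite zero_pivot.
    case: (eqVneq y p) => [->|_]; first by rewrite zero_pivot'.
    by move=> /= H; apply: sG.
  have [L HL] := IH _ cS' _ sG' pG.
  exists (fun a => if a == p then (fun _ => 0) else L a) => x y.
  rewrite (big_setD1 p pS) /= eqxx /= rmorph0 mul0r add0r HL.
  apply: eq_bigr => a; rewrite inS' => /andP [/negbTE -> _] //.
set g := G p p.
have g0' : 0 <= g by apply: psdf_diag.
have rg := real_ge0 g0'.
set r := sqrtC g.
have rr : r^* = r by apply: real_ge0; rewrite sqrtC_ge0.
have r2 : r * r = g by rewrite -expr2 sqrtCK.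
have rn0 : r != 0 by rewrite sqrtC_eq0.
pose G' x y := G x y - G x p * G p y / g.
have sG' : suppf G' (S :\ p).
  move=> x y; rewrite !inS' !negb_and !negbK /G'.
  case: (eqVneq x p) => [->|_].
    by rewrite -/g mulrAC divff // mul1r subrr.
  case: (eqVneq y p) => [->|_].
    by rewrite -/g mulfK // subrr.
  move=> /= /orP [H|H].
    by rewrite (sG x y) ?H // (sG x p) ?H // !mul0r subrr.
  by rewrite (sG x y) ?H ?orbT // (sG p y) ?H ?orbT // mulr0 mul0r subrr.
have pG' : psdf G'.
  move=> v.
  set beta := \sum_y G p y * v y.
  set c := beta / g.
  have := pG (fun z => v z + (- c) * dl p z).
  rewrite Bf_Dl Bf_Zl !Bf_Dr !Bf_Zr Bf_dl_l Bf_dl_r Bf_dd -/g -/beta.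
  have -> : \sum_x (v x)^* * G x p = beta^*.
    rewrite /beta rmorph_sum; apply: eq_bigr => x _.
    by rewrite rmorphM /= (psdf_herm p x pG) mulrC.
  have -> : Bf G' v v = Bf G v v - beta^* * beta / g.
    rewrite /Bf /G' /beta rmorph_sum mulr_suml mulr_suml -sumrB; apply: eq_bigr => x _.
    rewrite rmorphM /= -(psdf_herm p x pG) mulr_sumr mulr_suml -sumrB.
    by apply: eq_bigr => y _; ring.
  rewrite rmorphN rmorphM /= fmorphV.
  have rg2 : Num.Num_conj__canonical__GRing_RMorphism C g = g := rg.
  rewrite rg2.
  have -> : Bf G v v + - c * beta^* + - (beta^* / g) * (beta + - c * g) = Bf G v v - beta^* * beta / g.
    rewrite /c; field; by [].
  by [].
pose l y := G p y / r.
have [L HL] := IH _ cS' _ sG' pG'.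
exists (fun a => if a == p then l else L a) => x y.
rewrite (big_setD1 p pS) /= eqxx.
have -> : \sum_(a in S :\ p) ((if a == p then l else L a) x)^* * (if a == p then l else L a) y =
   \sum_(a in S :\ p) (L a x)^* * L a y.
  apply: eq_bigr => a; rewrite inS' => /andP [/negbTE -> _] //.
rewrite -HL /G' /l rmorphM /= fmorphV.
have rr2 : Num.Num_conj__canonical__GRing_RMorphism C r = r := rr.
rewrite rr2 -(psdf_herm p x pG) -r2.
field; by [].
Qed.
End Form.

Lemma chol (C : numClosedFieldType) (T : finType) (G : T -> T -> C) : psdf G ->
  exists L : T -> T -> C, forall x y, G x y = \sum_a (L a x)^* * L a y.
Proof.
move=> pG.
have sG : suppf G [set: T] by move=> x y; rewrite !inE.
have [L HL] := chol_aux erefl sG pG.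
by exists L => x y; rewrite HL; apply: eq_bigl => a; rewrite inE.
Qed.


Section Mat.
Variable R : realType.
Local Notation C := (R[i]).
Local Notation dl := (@dl R[i] _).

Lemma adjE m n (A : 'M[C]_(m, n)) i j : adj A i j = (A j i)^*.
Proof. by rewrite /adj !mxE. Qed.

Lemma quadE d (u v : 'cV[C]_d) (A : 'M[C]_d) :
  (adj u *m A *m v) 0 0 = Bf (fun i j => A i j) (fun k => u k 0) (fun k => v k 0).
Proof.
rewrite /Bf mxE.
under eq_bigr do rewrite mxE mulr_suml.
rewrite exchange_big /=; apply: eq_bigr => i _; apply: eq_bigr => j _.
by rewrite adjE.
Qed.

Lemma mx11E (A : 'M[C]_(1, 1)) (B : 'M[C]_(1,1)) : (A *m B) 0 0 = A 0 0 * B 0 0.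
Proof. by rewrite mxE big_ord1. Qed.

Lemma psd_rank1 d (u : 'cV[C]_d) : psd (u *m adj u).
Proof.
move=> v.
have -> : adj v *m (u *m adj u) *m v = (adj v *m u) *m (adj u *m v) by rewrite !mulmxA.
rewrite mx11E.
have -> : (adj u *m v) 0 0 = ((adj v *m u) 0 0)^*.
  rewrite !mxE rmorph_sum; apply: eq_bigr => k _.
  by rewrite !adjE rmorphM /= conjCK mulrC.
exact: mul_conjC_ge0.
Qed.

Lemma psdZ d (s : C) (A : 'M[C]_d) : 0 <= s -> psd A -> psd (s *: A).
Proof.
move=> s0 pA v.
by rewrite -scalemxAr -scalemxAl mxE mulr_ge0.
Qed.

Lemma sum_pair d (F : 'I_d * 'I_d -> C) : \sum_x F x = \sum_i \sum_p F (i, p).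
Proof. by rewrite pair_big; apply: eq_bigr => -[i p]. Qed.

Lemma kraus d (Phi : 'M[C]_d -> 'M[C]_d) :
  (forall a X Y, Phi (a *: X + Y) = a *: Phi X + Phi Y) ->
  psd_block (fun i j : 'I_d => Phi (delta_mx i j)) ->
  exists V : 'I_#|{: 'I_d * 'I_d}| -> 'M[C]_d,
    forall X, Phi X = \sum_a adj (V a) *m X *m V a.
Proof.
move=> hlin hcp.
have P0 : Phi 0 = 0.
  have h := hlin 1 0 0; rewrite !scale1r !addr0 in h.
  have : Phi 0 + Phi 0 = Phi 0 + 0 by rewrite addr0 -h.
  by move/addrI.
have PD X Y : Phi (X + Y) = Phi X + Phi Y by have := hlin 1 X Y; rewrite !scale1r.
have PZ a X : Phi (a *: X) = a *: Phi X by rewrite -(addr0 (a *: X)) hlin P0 addr0.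
have Psum (I : Type) (r : seq I) (P : pred I) (F : I -> 'M[C]_d) :
    Phi (\sum_(i <- r | P i) F i) = \sum_(i <- r | P i) Phi (F i).
  exact: (big_morph Phi PD P0).
pose G (x y : 'I_d * 'I_d) := Phi (delta_mx x.1 y.1) x.2 y.2.
have pG : psdf G.
  move=> w.
  have := hcp (fun i => \col_p w (i, p)).
  rewrite summxE.
  under eq_bigr do rewrite summxE.
  under eq_bigr do under eq_bigr do rewrite quadE.
  suff -> : Bf G w w = \sum_i \sum_j Bf (fun i0 j0 => Phi (delta_mx i j) i0 j0)
              (fun k => (\col_p w (i, p)) k 0) (fun k => (\col_p w (j, p)) k 0) by [].
  rewrite /Bf sum_pair; apply: eq_bigr => i _.
  under eq_bigr do rewrite sum_pair.
  rewrite exchange_big /=; apply: eq_bigr => j _.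
  apply: eq_bigr => p _; apply: eq_bigr => q _.
  by rewrite !mxE.
have [L HL] := chol pG.
pose V' (x : 'I_d * 'I_d) : 'M[C]_d := \matrix_(j, q) L x (j, q).
exists (fun a => V' (enum_val a)) => X.
rewrite -(big_enum_val (fun x => adj (V' x) *m X *m V' x)).
rewrite {1}(matrix_sum_delta X) (big_morph Phi PD P0).
under eq_bigr do rewrite (big_morph Phi PD P0).
apply/matrixP => p q; rewrite !summxE.
under eq_bigr do rewrite summxE.
under eq_bigr do under eq_bigr do rewrite PZ mxE.
under [RHS]eq_bigr do rewrite mxE.
under [RHS]eq_bigr do under eq_bigr do rewrite mxE mulr_suml.
rewrite exchange_big /=.
have HG i j : Phi (delta_mx i j) p q = \sum_a (L a (i,p))^* * L a (j,q) := HL (i,p) (j,q).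
under eq_bigr do under eq_bigr do rewrite HG mulr_sumr.
under eq_bigr do rewrite exchange_big.
rewrite exchange_big /=.
apply: eq_big => // a _; apply: eq_bigr => j _; apply: eq_bigr => i _.
rewrite adjE !mxE; ring.
Qed.

Lemma quad_col d (w v : 'I_d -> C) (A : 'M[C]_d) :
  (adj (\col_k w k) *m A *m \col_k v k) 0 0 = Bf (fun i j => A i j) w v.
Proof.
rewrite quadE /Bf; apply: eq_bigr => i _; apply: eq_bigr => j _; by rewrite !mxE.
Qed.

Lemma tr11 (A : 'M[C]_1) : \tr A = A 0 0.
Proof. by rewrite /mxtrace big_ord1. Qed.

Lemma tr_rank1 d (u : 'cV[C]_d) (A : 'M[C]_d) :
  \tr (A *m (u *m adj u)) = (adj u *m A *m u) 0 0.
Proof. by rewrite mulmxA mxtrace_mulC mulmxA tr11. Qed.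

Lemma dens_w d (w : 'I_d -> C) (s : C) : 0 <= s ->
  s * Bf (fun i j => (1%:M : 'M[C]_d) i j) w w = 1 ->
  density (s *: ((\col_k w k) *m adj (\col_k w k))).
Proof.
move=> s0 h; split; first by apply: psdZ => //; apply: psd_rank1.
by rewrite mxtraceZ -(mul1mx (_ *m _)) tr_rank1 quad_col.
Qed.

Lemma trace_W d (i0 : 'I_d) N (V : 'I_N -> 'M[C]_d) (c : C) :
  (forall X, density X -> \tr (\sum_a adj (V a) *m X *m V a) = c) ->
  \sum_a V a *m adj (V a) = c%:M /\ 0 <= c.
Proof.
move=> hyp.
set W := \sum_a V a *m adj (V a).
have key (w : 'I_d -> C) (s : C) : 0 <= s ->
    s * Bf (fun i j => (1%:M : 'M[C]_d) i j) w w = 1 ->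
    s * Bf (fun i j => W i j) w w = c.
  move=> s0 h; rewrite -(hyp _ (dens_w s0 h)) raddf_sum /=.
  under eq_bigr do rewrite -scalemxAr -scalemxAl mxtraceZ mxtrace_mulC mulmxA tr_rank1.
  rewrite -mulr_sumr -quad_col /W mulmx_sumr mulmx_suml summxE; congr (_ * _).
have half0 : 0 <= 1 / 2 :> C by rewrite divr_ge0 // ler0n.
have two0 : 2 != 0 :> C by rewrite pnatr_eq0.
have Wii i : W i i = c.
  have := key (dl i) 1 ler01; rewrite !mul1r !Bf_dd mxE eqxx; exact.
have off i j : i != j -> W i j = 0.
  move=> ij; have ji : j != i by rewrite eq_sym.
  have e1 := key (fun z => dl i z + 1 * dl j z) (1/2) half0.
  have e2 := key (fun z => dl i z + 'i * dl j z) (1/2) half0.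
  rewrite !Bf_ex !mxE !eqxx (negbTE ij) (negbTE ji) !Wii in e1 e2.
  rewrite /= conjCi iNi conjC1 !mul1r !mulr0 !addr0 in e1 e2.
  have h2 : 2^-1 * (1 + 1) = 1 :> C by field.
  have {}e1 := e1 h2; have {}e2 := e2 h2.
  have f1 : 2^-1 * (W i j + W j i) = 0 :> C by apply: (eq_by e1); field.
  have f2 : 2^-1 * ('i * (W i j - W j i)) = 0 :> C by apply: (eq_by e2); field.
  have i20 : 2^-1 != 0 :> C by rewrite invr_eq0.
  move/eqP: f1; rewrite mulf_eq0 (negbTE i20) /= => /eqP f1.
  move/eqP: f2; rewrite mulf_eq0 (negbTE i20) mulf_eq0 (negbTE (neq0Ci _)) /= => /eqP f2.
  have f3 : W i j *+ 2 = 0 *+ 2 by apply: (eq_by (f_equal2 +%R f1 f2)); ring.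
  by move/eqP: f3; rewrite eqrMn2r /= => /eqP.
split.
  apply/matrixP => i j; rewrite mxE; case: (eqVneq i j) => [->|ij].
    by rewrite Wii.
  by rewrite off // mulr0n.
rewrite -(Wii i0) /W summxE sumr_ge0 // => a _.
rewrite mxE sumr_ge0 // => k _; rewrite adjE; exact: mul_conjC_ge0.
Qed.

End Mat.


Section Main.
Variable R : realType.
Local Notation C := (R[i]).

Lemma homog_scale d n (K : multimap R d n) deg (rho : 'I_n.+1 -> 'M[C]_d) (z : C) :
  homogeneous K deg -> K (fun l => z *: rho l) = z ^+ (\sum_l deg l) *: K rho.
Proof.
move=> h.
have gen j : K (fun l : 'I_n.+1 => if (l < j)%N then z *: rho l else rho l) =
             z ^+ (\sum_(l : 'I_n.+1 | (l < j)%N) deg l) *: K rho.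
  elim: j => [|j IH].
    have -> : (fun l : 'I_n.+1 => if (l < 0)%N then z *: rho l else rho l) = rho.
      by apply: functional_extensionality => l; rewrite ltn0.
    by rewrite big_pred0 // expr0 scale1r.
  case: (ltnP j n.+1) => hj.
    pose o := Ordinal hj.
    pose f := fun l : 'I_n.+1 => if (l < j)%N then z *: rho l else rho l.
    have -> : (fun l : 'I_n.+1 => if (l < j.+1)%N then z *: rho l else rho l) = upd f o (z *: f o).
      apply: functional_extensionality => l; rewrite /upd /f.
      case: (eqVneq l o) => [->|lo] /=; first by rewrite ltnn ltnSn.
      rewrite ltnS leq_eqVlt.
      have -> : (val l == j) = false by apply/negbTE; apply: contra lo => /eqP e; apply/eqP; apply: val_inj.
      by [].
    rewrite h IH scalerA -exprD [in RHS](bigD1 o) /= ?ltnSn //.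
    do 3 f_equal; apply: eq_bigl => l.
    case: (eqVneq l o) => [->|lo] /=; first by rewrite andbF ltnn.
    rewrite andbT [in RHS]ltnS [in RHS]leq_eqVlt.
    have -> : (val l == j) = false by apply/negbTE; apply: contra lo => /eqP e; apply/eqP; apply: val_inj.
    by [].
  have e1 (l : 'I_n.+1) : (l < j.+1)%N = true by apply: (leq_trans (ltn_ord l)); rewrite ltnW.
  have e2 (l : 'I_n.+1) : (l < j)%N = true by apply: (leq_trans (ltn_ord l)).
  have -> : (fun l : 'I_n.+1 => if (l < j.+1)%N then z *: rho l else rho l) =
            (fun l : 'I_n.+1 => if (l < j)%N then z *: rho l else rho l).
    by apply: functional_extensionality => l; rewrite e1 e2.
  by rewrite IH; congr (_ ^+ _ *: _); apply: eq_bigl => l; rewrite e1 e2.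
have := gen n.+1.
have -> : (fun l : 'I_n.+1 => if (l < n.+1)%N then z *: rho l else rho l) = (fun l => z *: rho l).
  by apply: functional_extensionality => l; rewrite ltn_ord.
by move=> ->; congr (_ ^+ _ *: _); apply: eq_bigl => l; rewrite ltn_ord.
Qed.

Lemma homog_zero d n (K : multimap R d n) deg (rho : 'I_n.+1 -> 'M[C]_d) (m : 'I_n.+1) :
  homogeneous K deg -> (forall l, l != m -> deg l = 0%N) ->
  K rho = K (upd (fun _ => 0) m (rho m)).
Proof.
move=> h h0.
have gen j : K (fun l : 'I_n.+1 => if (l < j)%N && (l != m) then 0 else rho l) = K rho.
  elim: j => [|j IH].
    have -> : (fun l : 'I_n.+1 => if (l < 0)%N && (l != m) then 0 else rho l) = rho.
      by apply: functional_extensionality => l; rewrite ltn0.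
    by [].
  case: (ltnP j n.+1) => hj.
    pose o := Ordinal hj.
    pose f := fun l : 'I_n.+1 => if (l < j)%N && (l != m) then 0 else rho l.
    have ho (l : 'I_n.+1) : l != o -> (l < j.+1)%N = (l < j)%N.
      move=> lo; rewrite ltnS leq_eqVlt.
      have -> : (val l == j) = false by apply/negbTE; apply: contra lo => /eqP e; apply/eqP; apply: val_inj.
      by [].
    case: (eqVneq o m) => [om|om].
      have -> : (fun l : 'I_n.+1 => if (l < j.+1)%N && (l != m) then 0 else rho l) = f.
        apply: functional_extensionality => l; rewrite /f.
        case: (eqVneq l o) => [->|lo]; first by rewrite om eqxx !andbF.
        by rewrite ho.
      exact: IH.
    have -> : (fun l : 'I_n.+1 => if (l < j.+1)%N && (l != m) then 0 else rho l) = upd f o (0 *: f o).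
      apply: functional_extensionality => l; rewrite /upd /f.
      case: (eqVneq l o) => [->|lo] /=; first by rewrite om ltnSn scale0r.
      by rewrite ho.
    by rewrite h h0 // expr0 scale1r IH.
  have e1 (l : 'I_n.+1) : (l < j.+1)%N = true by apply: (leq_trans (ltn_ord l)); rewrite ltnW.
  have e2 (l : 'I_n.+1) : (l < j)%N = true by apply: (leq_trans (ltn_ord l)).
  have -> : (fun l : 'I_n.+1 => if (l < j.+1)%N && (l != m) then 0 else rho l) =
            (fun l : 'I_n.+1 => if (l < j)%N && (l != m) then 0 else rho l).
    by apply: functional_extensionality => l; rewrite e1 e2.
  exact: IH.
rewrite -(gen n.+1); congr K; apply: functional_extensionality => l.
rewrite /upd ltn_ord /=; case: (eqVneq l m) => [->|] //.
Qed.

Lemma poly_zero (P : {poly C}) : (forall p : C, 0 <= p <= 1 -> P.[p] = 0) -> P = 0.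
Proof.
move=> h; apply/eqP; apply/negPn/negP => P0.
pose rs := [seq ((k.+1)%:R : C)^-1 | k <- iota 0 (size P)].
suff : (size rs < size P)%N by rewrite size_map size_iota ltnn.
apply: max_poly_roots => //.
  apply/allP => x /mapP [k _ ->]; rewrite /root h //.
  apply/andP; split; first by rewrite invr_ge0 ler0n.
  by rewrite invf_le1 ?ltr0n // ler1n.
rewrite map_inj_uniq ?iota_uniq // => k l /invr_inj /eqP.
by rewrite eqr_nat => /eqP [].
Qed.

Lemma deg_extract d n N (Ks : 'I_N -> multimap R d n) deg (rho : 'I_n.+1 -> 'M[C]_d) :
  (forall t, homogeneous (Ks t) (deg t)) ->
  (forall p : C, 0 <= p <= 1 -> \sum_t Ks t (fun m => p *: rho m) = p *: \sum_t Ks t rho) ->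
  \sum_t Ks t rho = \sum_(t | (\sum_m deg t m == 1)%N) Ks t rho.
Proof.
move=> hh hb.
apply/matrixP => x y.
pose c t := Ks t rho x y.
pose P : {poly C} := \sum_t c t *: ('X^(\sum_m deg t m) - 'X).
have P0 : P = 0.
  apply: poly_zero => p hp.
  rewrite /P horner_sum.
  under eq_bigr do rewrite hornerZ hornerD hornerN hornerXn hornerX mulrBr.
  rewrite sumrB -mulr_suml.
  have := congr1 (fun M : 'M[C]_d => M x y) (hb p hp).
  rewrite !summxE mxE summxE.
  under eq_bigr => t _ do rewrite (homog_scale _ _ (hh t)) mxE.
  move=> e; apply/eqP; rewrite subr_eq0 mulrC -e; apply/eqP.
  by apply: eq_bigr => t _; rewrite /c mulrC.
have := congr1 (fun q : {poly C} => q`_1) P0.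
rewrite /P coef_sum coef0.
under eq_bigr do rewrite coefZ coefB coefXn coefX eqxx mulrBr mulr1.
rewrite sumrB => /eqP; rewrite subr_eq0 => /eqP e.
rewrite !summxE -e [in RHS]big_mkcond /=; apply: eq_bigr => t _.
by rewrite eq_sym; case: (_ == _); rewrite ?mulr1 ?mulr0.
Qed.

Definition Pdeg n (deg : 'I_n.+1 -> nat) (m : 'I_n.+1) : bool :=
  [forall l, deg l == (l == m)].

Lemma Pdeg_tot n (deg : 'I_n.+1 -> nat) m : Pdeg deg m -> (\sum_l deg l = 1)%N.
Proof.
move/forallP => h.
rewrite (eq_bigr (fun l => nat_of_bool (l == m))); last by move=> l _; apply/eqP.
rewrite (bigD1 m) //= eqxx big1 // => l /negbTE ->; by [].
Qed.

Lemma Pdeg_uniq n (deg : 'I_n.+1 -> nat) m m' : Pdeg deg m -> Pdeg deg m' -> m' = m.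
Proof.
move=> /forallP h /forallP h'.
have := h m'; rewrite (eqP (h' m')) eqxx.
by case: (eqVneq m' m).
Qed.

Lemma Pdeg_ex n (deg : 'I_n.+1 -> nat) : (\sum_l deg l = 1)%N -> exists m, Pdeg deg m.
Proof.
move=> h.
case: (pickP (fun l => deg l != 0%N)) => [m dm|h0]; last first.
  move: h; rewrite big1 // => l _; by move/negbFE/eqP: (h0 l).
move: h; rewrite (bigD1 m) //= => h.
have dm1 : deg m = 1%N by move: dm => /eqP; lia.
move: h; rewrite dm1 -[X in _ = X]addn0 => /addnI s0.
exists m; apply/forallP => l.
case: (eqVneq l m) => [->|lm]; first by rewrite dm1.
move/eqP: s0; rewrite sum_nat_eq0 => /forallP /(_ l); rewrite lm /=.
by [].
Qed.

Lemma exchange_deg d n N (deg : 'I_N -> 'I_n.+1 -> nat) (F : 'I_N -> 'M[C]_d) :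
  \sum_(t | (\sum_m deg t m == 1)%N) F t = \sum_m \sum_(t | Pdeg (deg t) m) F t.
Proof.
under [RHS]eq_bigr do rewrite big_mkcond.
rewrite exchange_big big_mkcond /=; apply: eq_bigr => t _.
case: (boolP [exists m, Pdeg (deg t) m]).
  case/existsP => m Pm.
  rewrite (Pdeg_tot Pm) eqxx (bigD1 m) //= Pm big1 ?addr0 // => m' m'm.
  case: ifP => // Pm'; by rewrite (Pdeg_uniq Pm Pm') eqxx in m'm.
rewrite negb_exists => /forallP h.
rewrite [RHS]big1 => [|m _]; last by rewrite (negbTE (h m)).
case: ifP => // /eqP /Pdeg_ex [m Pm].
by have := h m; rewrite Pm.
Qed.

Lemma psd_block_sum d k I (r : seq I) (P : pred I) (B : I -> 'I_k -> 'I_k -> 'M[C]_d) :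
  (forall t, P t -> psd_block (B t)) ->
  psd_block (fun i j => \sum_(t <- r | P t) B t i j).
Proof.
move=> h v.
under eq_bigr do under eq_bigr do rewrite mulmx_sumr mulmx_suml.
under eq_bigr do rewrite exchange_big.
rewrite exchange_big summxE /=; apply: sumr_ge0 => t Pt.
exact: h.
Qed.

Lemma psd_block_zero d k : psd_block (fun i j : 'I_k => (0 : 'M[C]_d)).
Proof.
move=> v; rewrite summxE; apply: sumr_ge0 => i _; rewrite summxE; apply: sumr_ge0 => j _.
by rewrite mulmx0 mul0mx mxE.
Qed.

Lemma delta_quad d (u w : 'cV[C]_d) i j :
  (adj u *m delta_mx i j *m w) 0 0 = (u i 0)^* * w j 0.
Proof.
rewrite quadE /Bf.
have E p q : (u p 0)^* * delta_mx i j p q * w q 0 =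
    (p == i)%:R * ((q == j)%:R * ((u p 0)^* * w q 0)).
  by rewrite mxE; case: (p == i); case: (q == j); rewrite /=; ring.
under eq_bigr do under eq_bigr do rewrite E.
under eq_bigr do rewrite -mulr_sumr sum_dl.
by rewrite sum_dl.
Qed.

Lemma psd_block_delta d : psd_block (fun i j : 'I_d => (delta_mx i j : 'M[C]_d)).
Proof.
move=> v; rewrite summxE.
under eq_bigr do rewrite summxE.
under eq_bigr do under eq_bigr do rewrite delta_quad.
under eq_bigr do rewrite -mulr_sumr.
rewrite -mulr_suml -rmorph_sum mulrC; exact: mul_conjC_ge0.
Qed.

End Main.

Unset Implicit Arguments.


Theorem mainTheorem4 (R : realType) (d n : nat) (K : multimap R d n) :
  (* (a) Ando--Choi decomposition into finitely many homogeneous CP maps *)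
  (exists (N : nat) (deg : 'I_N -> 'I_n.+1 -> nat) (Ks : 'I_N -> multimap R d n),
     [/\ forall rho, K rho = \sum_(t < N) Ks t rho,
         forall t, mCP (Ks t),
         forall t, homogeneous (Ks t) (deg t) &
         forall t (m : 'I_n.+1),
           deg t m = 1%N -> (forall l, l != m -> deg t l = 0%N) ->
           linear_in (Ks t) m]) ->
  (* (b) non-signalling condition on sub-normalized states *)
  (forall (p : R[i]) (rho : 'I_n.+1 -> 'M[R[i]]_d),
     0 <= p <= 1 -> (forall m, density (rho m)) ->
     K (fun m => p *: rho m) = p *: K rho) ->
  (* (c) trace preservation on density matrices *)
  (forall rho : 'I_n.+1 -> 'M[R[i]]_d,
     (forall m, density (rho m)) -> \tr (K rho) = 1) ->
  exists (A : 'I_n.+1 -> nat) (V : forall m : 'I_n.+1, 'I_(A m) -> 'M[R[i]]_d)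
         (p : 'I_n.+1 -> R[i]),
    [/\ forall m, 0 <= p m,
        \sum_(m < n.+1) p m = 1,
        forall m, \sum_(a < A m) (V m a *m adj (V m a)) = (p m)%:M &
        forall rho : 'I_n.+1 -> 'M[R[i]]_d,
          (forall m, density (rho m)) ->
          K rho = \sum_(m < n.+1) \sum_(a < A m) (adj (V m a) *m rho m *m V m a)].
Proof.
case=> N [deg [Ks [hsum hcp hhom hlin]]] hb hc.
case: d K Ks hsum hcp hhom hlin hb hc => [|d'] K Ks hsum hcp hhom hlin hb hc.
  exists (fun _ => 0%N), (fun m a => 0), (fun m => (m == ord0)%:R); split.
  - by move=> m; rewrite ler0n.
  - by rewrite (bigD1 ord0) //= big1 ?addr0 // => m /negbTE ->.
  - by move=> m; apply/matrixP => i; case: i.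
  - move=> rho hd; have [_ htr] := hd ord0; move: htr.
    by rewrite /mxtrace big_ord0 => /eqP; rewrite eq_sym oner_eq0.
pose rho0 := fun _ : 'I_n.+1 => (0 : 'M[R[i]]_d'.+1).
pose Phi m X := \sum_(t | Pdeg (deg t) m) Ks t (upd rho0 m X).
have Kdec rho : (forall m, density (rho m)) -> K rho = \sum_m Phi m (rho m).
  move=> hd.
  rewrite hsum (@deg_extract R _ _ _ Ks deg rho hhom); last first.
    by move=> p hp; rewrite -!hsum; exact: hb.
  rewrite exchange_deg; apply: eq_bigr => m _; apply: eq_bigr => t Pt.
  apply: homog_zero (hhom t) _.
  move=> l lm; move/forallP: Pt => /(_ l) /eqP ->; by rewrite (negbTE lm).
have Plin m a X Y : Phi m (a *: X + Y) = a *: Phi m X + Phi m Y.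
  rewrite /Phi scaler_sumr -big_split; apply: eq_bigr => t Pt.
  move/forallP: (Pt) => h.
  apply: hlin.
    by move: (h m); rewrite eqxx => /eqP.
  by move=> l lm; move: (h l); rewrite (negbTE lm) => /eqP.
have Pcp m : psd_block (fun i j : 'I_d'.+1 => Phi m (delta_mx i j)).
  apply: psd_block_sum => t _.
  apply: (hcp t d'.+1 (fun l i j => if l == m then delta_mx i j else 0)).
  move=> l; case: (l == m); [exact: psd_block_delta | exact: psd_block_zero].
have hK m := kraus (Plin m) (Pcp m).
have [Vf hVf] := fin_all_exists hK.
pose sigma : 'M[R[i]]_d'.+1 :=
  1 *: (\col_k (@dl R[i] _ ord0 k) *m adj (\col_k (@dl R[i] _ ord0 k))).
have hsig : density sigma.
  by apply: dens_w; [exact: ler01 | rewrite mul1r Bf_dd mxE eqxx].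
pose c m := \tr (Phi m sigma).
have htrc m X : density X -> \tr (Phi m X) = c m.
  move=> hX.
  have hd1 : forall l, density (upd (fun _ => sigma) m X l).
    by move=> l; rewrite /upd; case: (l == m).
  have h1 := hc _ hd1.
  have h2 := hc (fun _ => sigma) (fun _ => hsig).
  rewrite Kdec // raddf_sum (bigD1 m) //= in h1.
  rewrite Kdec // raddf_sum (bigD1 m) //= in h2.
  rewrite /upd eqxx in h1.
  have e : \sum_(l < n.+1 | l != m) \tr (Phi l (upd (fun _ => sigma) m X l)) =
           \sum_(l < n.+1 | l != m) \tr (Phi l sigma).
    by apply: eq_bigr => l lm; rewrite /upd (negbTE lm).
  rewrite /upd in e; rewrite e -h2 in h1.
  exact: addIr h1.
have hW m := @trace_W R _ ord0 _ (Vf m) (c m) (fun X hX => etrans (congr1 _ (esym (hVf m X))) (htrc m X hX)).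
exists (fun _ => #|{: 'I_d'.+1 * 'I_d'.+1}|), Vf, c; split.
- by move=> m; case: (hW m).
- by have := hc (fun _ => sigma) (fun _ => hsig); rewrite Kdec // raddf_sum.
- by move=> m; case: (hW m).
- by move=> rho hd; rewrite Kdec //; apply: eq_bigr => m _; apply: hVf.
Qed.
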